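(* Let $I,J,J'\in\mathcal I$ be such that $J\vartriangleleft I$, $J'\vartriangleleft I$, and $J\neq J'$. Then at least one of the following holds: $J'\vartriangleleft J$; $J\vartriangleleft J'$; or there is $J''\in\mathcal I$ with $J''\vartriangleleft J$ and $J''\vartriangleleft J'$.
   Context: Let $(a_i)_{i=1,\dots,n}$ be a sequence of distinct integers between $1$ and $n$, and set $a_0=0$; write $A=(a_i)_{i=0,1,\dots,n}$. A set $I\subseteq\{0\}\cup[n]$ is feasible if $a_i<a_j$ for all $i,j\in I$ with $i<j$; $\mathcal I$ denotes the family of feasible sets of maximum cardinality. Patience sorting: start with empty piles $P_0,\dots,P_n$; for $i=0,1,\dots,n$ in order, put $a_i$ on top of the pile $P_j$ with smallest index $j$ such that $P_j$ is empty or the top element of $P_j$ is greater than $a_i$. Let $P_0,\dots,P_k$ be the resulting nonempty piles. Say $a_u$ is placed below $a_v$ on a pile if both lie on the same pile and $a_u$ was put there before $a_v$. For $I,J\in\mathcal I$, write $I\vartriangleleft J$ if $I\setminus J=\{u\}$ and $J\setminus I=\{v\}$ for some $u,v$ such that $a_u$ is placed strictly below $a_v$ on pile $P_i$ for some $1\le i\le k$. *)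

(* Defs.v *)
From mathcomp Require Import all_boot all_order.
Set Implicit Arguments. Unset Strict Implicit. Unset Printing Implicit Defensive.

(* The sequence A = (a_0, a_1, ..., a_n) is given as a : nat -> nat;
   only the values a 0, ..., a n matter. Indices are elements of 'I_n.+1. *)

Definition valid_seq (n : nat) (a : nat -> nat) : Prop :=
  a 0 = 0 /\
  (forall i, 1 <= i <= n -> 1 <= a i <= n) /\
  (forall i j, 1 <= i <= n -> 1 <= j <= n -> a i = a j -> i = j).

Definition feasible (n : nat) (a : nat -> nat) (I : {set 'I_n.+1}) : Prop :=
  forall i j : 'I_n.+1, i \in I -> j \in I -> (i < j)%N -> a i < a j.

Definition max_feasible (n : nat) (a : nat -> nat) (I : {set 'I_n.+1}) : Prop :=
  feasible a I /\ forall K : {set 'I_n.+1}, feasible a K -> #|K| <= #|I|.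

(* Patience sorting.  The state is the sequence of tops of the piles
   P_0, P_1, ... (index j = pile P_j). *)
Definition pile_choice (tops : seq nat) (x : nat) : nat :=
  find (fun t => x < t) tops.

Definition ps_step (a : nat -> nat) (tops : seq nat) (i : nat) : seq nat :=
  set_nth 0 tops (pile_choice tops (a i)) (a i).

Definition tops_after (a : nat -> nat) (k : nat) : seq nat :=
  foldl (ps_step a) [::] (iota 0 k).

Definition pile (a : nat -> nat) (i : nat) : nat :=
  pile_choice (tops_after a i) (a i).

(* a_u is placed strictly below a_v on the same pile P_p (elements are put
   in the order of their indices) *)
Definition placed_below (a : nat -> nat) (u v : nat) : Prop :=
  pile a u = pile a v /\ u < v.

Definition tri (n : nat) (a : nat -> nat) (I J : {set 'I_n.+1}) : Prop :=
  exists u v : 'I_n.+1,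
    I :\: J = [set u] /\ J :\: I = [set v] /\
    1 <= pile a u /\ placed_below a u v.

(* Main.v *)
Require Import Defs.
From mathcomp Require Import all_boot all_order.
From mathcomp Require Import zify.

Lemma tops_S a k : tops_after a k.+1 = ps_step a (tops_after a k) k.
Proof. by rewrite /tops_after -addn1 iotaD foldl_cat add0n. Qed.

Lemma inv a k :
  (forall i j, i <= j -> j < size (tops_after a k) ->
     nth 0 (tops_after a k) i <= nth 0 (tops_after a k) j) /\
  (forall x, x < k -> pile a x < size (tops_after a k) /\
     nth 0 (tops_after a k) (pile a x) <= a x).
Proof.
elim: k => [|k [IH1 IH2]]; first by split.
rewrite tops_S /ps_step.
have hp : pile a k = pile_choice (tops_after a k) (a k) by [].
set s := tops_after a k in IH1 IH2 hp *.
set p := pile_choice s (a k) in hp *.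
have psz : p <= size s := find_size _ _.
have bef i : i < p -> nth 0 s i <= a k.
  move=> ip; have := before_find 0 ip; rewrite /= => /negbT.
  by rewrite -leqNgt.
have atp : p < size s -> a k < nth 0 s p.
  by move=> ps; apply: (@nth_find _ 0 (fun t => a k < t)); rewrite has_find.
split.
- move=> i j ij; rewrite size_set_nth !nth_set_nth /= => jsz.
  case: (eqVneq i p) => [ei|ip]; case: (eqVneq j p) => [ej|jp].
  + by [].
  + subst i. have js : j < size s by lia.
    have ps : p < size s by lia.
    exact: (ltnW (leq_trans (atp ps) (IH1 p j ij js))).
  + apply: bef; lia.
  + apply: IH1 => //; lia.
- move=> x; rewrite ltnS leq_eqVlt => /orP [/eqP ->| xk].
  + rewrite hp size_set_nth nth_set_nth /= eqxx; split => //; lia.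
  + have [h1 h2] := IH2 x xk.
    rewrite size_set_nth nth_set_nth /=; split; first lia.
    case: eqP => [e|_] //.
    rewrite e in h1 h2. exact: (ltnW (leq_trans (atp h1) h2)).
Qed.

Lemma pile_same a u v : u < v -> pile a u = pile a v -> a v < a u.
Proof.
move=> uv e. have [_ H] := inv a v. have [h1 h2] := H u uv.
have : a v < nth 0 (tops_after a v) (pile a v).
  apply: (@nth_find _ 0 (fun t => a v < t)); rewrite has_find.
  by rewrite e in h1; exact: h1.
move=> h; rewrite -e in h; exact: (leq_trans h h2).
Qed.

Lemma pile_lt a x y : x < y -> a x < a y -> pile a x < pile a y.
Proof.
move=> xy axy. have [S H] := inv a y. have [h1 h2] := H x xy.
rewrite ltnNge; apply/negP => le.
have hs : pile a y < size (tops_after a y) by lia.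
have : a y < nth 0 (tops_after a y) (pile a y).
  apply: (@nth_find _ 0 (fun t => a y < t)); rewrite has_find.
  exact: hs.
have := S _ _ le h1. lia.
Qed.

Lemma feas_pile n a (K : {set 'I_n.+1}) (x y : 'I_n.+1) :
  feasible a K -> x \in K -> y \in K -> pile a x < pile a y ->
  (x < y) && (a x < a y).
Proof.
move=> FK xK yK lt. case: (ltngtP x y) => [xy|yx|e].
- by rewrite /= FK.
- have := @pile_lt a _ _ yx (FK _ _ yK xK yx). lia.
- by rewrite e ltnn in lt.
Qed.

Lemma feas_inj n a (K : {set 'I_n.+1}) (x y : 'I_n.+1) :
  feasible a K -> x \in K -> y \in K -> pile a x = pile a y -> x = y.
Proof.
move=> FK xK yK e. case: (ltngtP x y) => [xy|yx|e'].
- have := @pile_lt a _ _ xy (FK _ _ xK yK xy). lia.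
- have := @pile_lt a _ _ yx (FK _ _ yK xK yx). lia.
- exact: val_inj.
Qed.

Ltac simp_facts := repeat match goal with
 | H : is_true (?a != ?b) |- context [?a == ?b] => rewrite (negbTE H)
 | H : is_true (?a != ?b) |- context [?b == ?a] => rewrite [b == a]eq_sym (negbTE H)
 | H : is_true (?a \notin ?S) |- context [?a \in ?S] => rewrite (negbTE H)
 | H : is_true (?a \in ?S) |- context [?a \in ?S] => rewrite H
 | |- context [?a == ?a] => rewrite eqxx
 end.

Ltac bash := rewrite ?inE; repeat (simp_facts; rewrite /=;
  match goal with |- context [?a == ?b] => case: (eqVneq a b) => [->|?] end);
  simp_facts; rewrite /=; try done; try by case: (_ \in _).

Lemma tri_eq n (I J : {set 'I_n.+1}) u v :
  J :\: I = [set u] -> I :\: J = [set v] ->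
  [/\ J = u |: (I :\ v), u \notin I, v \in I & u != v].
Proof.
move=> /setP h1 /setP h2.
have hu := h1 u; have hv := h2 v; rewrite !inE eqxx in hu; rewrite !inE eqxx in hv.
case/andP: hu => uI uJ; case/andP: hv => vJ vI.
split => //; last by apply/eqP => e; rewrite e vI in uI.
apply/setP => x; move: (h1 x) (h2 x); rewrite !inE.
by case: (x \in J); case: (x \in I); case: (x == u); case: (x == v).
Qed.

Lemma key n a (I J J' : {set 'I_n.+1}) (u v u' v' : 'I_n.+1) :
  max_feasible a I -> feasible a J -> feasible a J' ->
  J = u |: (I :\ v) -> u \notin I -> v \in I ->
  J' = u' |: (I :\ v') -> u' \notin I -> v' \in I ->
  1 <= pile a u -> pile a u = pile a v -> u < v ->
  1 <= pile a u' -> pile a u' = pile a v' -> u' < v' ->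
  pile a u < pile a u' ->
  exists J'', max_feasible a J'' /\ tri a J'' J /\ tri a J'' J'.
Proof.
move=> [FI MI] FJ FJ' eJ uI vI eJ' u'I v'I p1 pe uv p1' pe' uv' lt.
have nvv' : v != v' by apply/eqP => e; move: lt; rewrite pe pe' e ltnn.
have nuu' : u != u' by apply/eqP => e; move: lt; rewrite e ltnn.
have nuv : u != v by apply/eqP => e; rewrite e vI in uI.
have nu'v' : u' != v' by apply/eqP => e; rewrite e v'I in u'I.
have nuv' : u != v' by apply/eqP => e; rewrite e v'I in uI.
have nu'v : u' != v by apply/eqP => e; rewrite e vI in u'I.
have uJ : u \in J by rewrite eJ; bash.
have v'J : v' \in J by rewrite eJ; bash.
have u'J' : u' \in J' by rewrite eJ'; bash.
have vJ' : v \in J' by rewrite eJ'; bash.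
have /andP [vv' avv'] : (v < v') && (a v < a v').
  by apply: (@feas_pile n a I v v' FI) => //; rewrite -pe -pe'.
have /andP [uv'' auv'] : (u < v') && (a u < a v').
  by apply: (@feas_pile n a J u v' FJ) => //; rewrite -pe'.
have /andP [vu' avu'] : (v < u') && (a v < a u').
  by apply: (@feas_pile n a J' v u' FJ') => //; rewrite -pe.
have av'u' := @pile_same a _ _ uv' pe'.
have uu' : u < u' := ltn_trans uv vu'.
have auu' : a u < a u' := ltn_trans auv' av'u'.
set J'' := u |: (u' |: (I :\ v :\ v')).
have hJ x : x \in J'' -> (x \in J) || (x == u') by rewrite eJ; bash.
have hJ' x : x \in J'' -> (x \in J') || (x == u) by rewrite eJ'; bash.
exists J''; split; [split|split].
- move=> x y hx hy xy.
  case/orP: (hJ x hx) => [xJ|/eqP ex]; case/orP: (hJ y hy) => [yJ|/eqP ey].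
  + exact: FJ.
  + subst y. case/orP: (hJ' x hx) => [xJ'|/eqP ex]; first exact: FJ'.
    by subst x.
  + subst x. case/orP: (hJ' y hy) => [yJ'|/eqP ey]; first exact: FJ'.
    subst y; by move: (ltn_trans xy uu'); rewrite ltnn.
  + subst x y; by rewrite ltnn in xy.
- move=> K FK. apply: (leq_trans (MI K FK)).
  rewrite /J'' !cardsU1 (cardsD1 v I) (cardsD1 v' (I :\ v)).
  have -> : (u \in u' |: (I :\ v :\ v')) = false by bash.
  have -> : (u' \in (I :\ v :\ v')) = false by bash.
  have -> : (v' \in I :\ v) = true by bash.
  by rewrite vI.
- exists u', v'; split; [apply/setP => x; rewrite eJ; bash|].
  split; [apply/setP => x; rewrite eJ; bash|].
  by split; [|split].
- exists u, v; split; [apply/setP => x; rewrite eJ'; bash|].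
  split; [apply/setP => x; rewrite eJ'; bash|].
  by split; [|split].
Qed.

Theorem lemma1 (n : nat) (a : nat -> nat) (I J J' : {set 'I_n.+1}) :
  valid_seq n a ->
  max_feasible a I -> max_feasible a J -> max_feasible a J' ->
  tri a J I -> tri a J' I -> J <> J' ->
  tri a J' J \/ tri a J J' \/
  (exists J'' : {set 'I_n.+1},
     max_feasible a J'' /\ tri a J'' J /\ tri a J'' J').
Proof.
move=> _ MI [FJ MJ] [FJ' MJ'] [u [v [h1 [h2 [p1 [pe uv]]]]]]
  [u' [v' [h1' [h2' [p1' [pe' uv']]]]]] neq.
have [eJ uI vI nuv] := @tri_eq n I J u v h1 h2.
have [eJ' u'I v'I nu'v'] := @tri_eq n I J' u' v' h1' h2'.
case: (ltngtP (pile a u) (pile a u')) => [lt|gt|eq].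
- right; right.
  exact: (@key n a I J J' u v u' v' MI FJ FJ' eJ uI vI eJ' u'I v'I p1 pe uv p1' pe' uv' lt).
- right; right.
  have [J'' [M [t1 t2]]] :=
    (@key n a I J' J u' v' u v MI FJ' FJ eJ' u'I v'I eJ uI vI p1' pe' uv' p1 pe uv gt).
  by exists J''.
- have evv : v = v'.
    apply: (@feas_inj n a I v v' MI.1 vI v'I); by rewrite -pe -pe' eq.
  subst v'.
  have nuu' : u != u' by apply/eqP => e; apply: neq; rewrite eJ eJ' e.
  have nuv' : u != v by apply/eqP => e; rewrite e vI in uI.
  have nu'v : u' != v by apply/eqP => e; rewrite e vI in u'I.
  case: (ltngtP u u') => [l|l|e].
  + right; left. exists u, u'.
    split; [apply/setP => x; rewrite eJ eJ'; bash|].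
    split; [apply/setP => x; rewrite eJ eJ'; bash|].
    by split; [|split].
  + left. exists u', u.
    split; [apply/setP => x; rewrite eJ eJ'; bash|].
    split; [apply/setP => x; rewrite eJ eJ'; bash|].
    by split; [|split].
  + by rewrite (val_inj e) eqxx in nuu'.
Qed.
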